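(* Let $G$ be a connected graph with vertices $v_1,\dots,v_n$, and let $k_1,k_2,k_3$ be nonnegative integers with $k_2\neq k_3$. Then \[ \sum_{i=1}^{n} dav(G-v_i,k_1,k_2,k_3)=(n-2-k_1-k_2-k_3)\,dav(G,k_1,k_2,k_3)+(k_1+1)\,dav(G,k_1+1,k_2,k_3)+(k_2+1)\,dav(G,k_1,k_2+1,k_3)+(k_3+1)\,dav(G,k_1,k_2,k_3+1). \]
   Context: All graphs are finite, simple and undirected. $G-v$ denotes the graph obtained from $G$ by deleting vertex $v$ and its incident edges. For a graph $F$ and nonnegative integers $k_1,k_2,k_3$, $dav(F,k_1,k_2,k_3)$ denotes the number of pairs of adjacent vertices $x$ and $y$ in $F$ such that exactly $k_1$ vertices are adjacent to both $x$ and $y$, exactly $k_2$ vertices other than $y$ are adjacent to $x$ but not to $y$, and exactly $k_3$ vertices other than $x$ are adjacent to $y$ but not to $x$. *)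

(* Defs.v *)
From mathcomp Require Import all_boot all_order all_algebra.
Set Implicit Arguments. Unset Strict Implicit. Unset Printing Implicit Defensive.

(* The graph induced on a
   vertex subset S is represented by the pair (e, S); the whole graph G is
   S = [set: T] and G - v is S = [set: T] :\ v. *)

Definition dav_on (T : finType) (e : rel T) (S : {set T}) (k1 k2 k3 : nat) : nat :=
  #|[set p : T * T |
      [&& p.1 \in S, p.2 \in S, e p.1 p.2,
          #|[set z in S | e p.1 z && e p.2 z]| == k1,
          #|[set z in S | [&& e p.1 z, ~~ e p.2 z & z != p.2]]| == k2 &
          #|[set z in S | [&& e p.2 z, ~~ e p.1 z & z != p.1]]| == k3]]|.

Definition dav (T : finType) (e : rel T) (k1 k2 k3 : nat) : nat :=
  dav_on e [set: T] k1 k2 k3.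

Definition dav_del (T : finType) (e : rel T) (v : T) (k1 k2 k3 : nat) : nat :=
  dav_on e ([set: T] :\ v) k1 k2 k3.

Definition connected_graph (T : finType) (e : rel T) : Prop :=
  forall x y : T, connect e x y.

(* Main.v *)
Require Import Defs.
From mathcomp Require Import all_boot all_order all_algebra.
From mathcomp Require Import ring.
Import GRing.Theory Num.Theory.
Local Open Scope ring_scope.

Section Aux.
Variable T : finType.
Variable e : rel T.
Variable e_irr : irreflexive e.
Variables k1 k2 k3 : nat.

Lemma card_sum (T' : finType) (P : pred T') :
  #|[set p | P p]| = (\sum_p (P p : nat))%N.
Proof.
rewrite -sum1_card big_mkcond /=; apply: eq_bigr => p _; rewrite inE.
by case: (P p).
Qed.

Lemma sumZ (T' : finType) (F : T' -> nat) :
  (\sum_v F v)%N%:Z = \sum_v (F v)%:Z.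
Proof. exact: (big_morph Posz PoszD (erefl _)). Qed.

Lemma setTfilter (S : {set T}) (Q : pred T) :
  [set z in S | Q z] = [set z | Q z] :&: S.
Proof. by apply/setP => z; rewrite !inE andbC. Qed.

Lemma setD1filter v (Q : pred T) :
  [set z in [set: T] :\ v | Q z] = [set z | Q z] :\ v.
Proof. by apply/setP => z; rewrite !inE; case: (Q z); case: (z == v). Qed.

Lemma cardsD1' (A : {set T}) v : #|A :\ v| = (#|A| - (v \in A))%N.
Proof. by rewrite (cardsD1 v A) addKn. Qed.

Definition G (a b c : nat) : int := ([&& a == k1, b == k2 & c == k3] : nat)%:Z.

Lemma point (ex ey nx ny : bool) (a b c : nat) : (ex -> nx) -> (ey -> ny) ->
 ([&& nx, ny, (a - (ex && ey))%N == k1, (b - [&& ex, ~~ey & ny])%N == k2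
    & (c - [&& ey, ~~ex & nx])%N == k3] : nat)%:Z
 = ((nx && ny):nat)%:Z * G a b c + ((ex&&ey):nat)%:Z * (G (a-1) b c - G a b c)
   + ([&& ex, ~~ey & ny]:nat)%:Z * (G a (b-1) c - G a b c)
   + ([&& ey, ~~ex & nx]:nat)%:Z * (G a b (c-1) - G a b c).
Proof.
rewrite /G.
case: ex; case: ey; case: nx; case: ny => //= h1 h2; try (by have := h1 isT);
  try (by have := h2 isT); rewrite ?subn0; ring.
Qed.


Lemma final (n s a b c : nat) : (s + 2)%N = n ->
  s%:Z * G a b c + a%:Z * (G (a - 1)%N b c - G a b c)
  + b%:Z * (G a (b - 1)%N c - G a b c) + c%:Z * (G a b (c - 1)%N - G a b c)
  = (n%:Z - 2 - k1%:Z - k2%:Z - k3%:Z) * G a b c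
    + (k1.+1)%:Z * ([&& a == k1.+1, b == k2 & c == k3] : nat)%:Z
    + (k2.+1)%:Z * ([&& a == k1, b == k2.+1 & c == k3] : nat)%:Z
    + (k3.+1)%:Z * ([&& a == k1, b == k2 & c == k3.+1] : nat)%:Z.
Proof.
move=> <-; move: a b c.
have fa a b c : a%:Z * G a b c = k1%:Z * G a b c.
  by rewrite /G; case: eqP => [->|] //=; rewrite !mulr0.
have fb a b c : b%:Z * G a b c = k2%:Z * G a b c.
  by rewrite /G; case: (b =P k2) => [->|] //=; rewrite andbF !mulr0.
have fc a b c : c%:Z * G a b c = k3%:Z * G a b c.
  by rewrite /G; case: (c =P k3) => [->|] //=; rewrite !andbF !mulr0.
have ga a b c : a%:Z * G (a - 1)%N b c = (k1.+1)%:Z * ([&& a == k1.+1, b == k2 & c == k3] : nat)%:Z.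
  rewrite /G; case: a => [|a] /=; first by rewrite mul0r mulr0.
  by rewrite subn1 /= eqSS; case: eqP => [->|] //=; rewrite !mulr0.
have gb a b c : b%:Z * G a (b - 1)%N c = (k2.+1)%:Z * ([&& a == k1, b == k2.+1 & c == k3] : nat)%:Z.
  rewrite /G; case: b => [|b] /=; first by rewrite mul0r andbF mulr0.
  by rewrite subn1 /= eqSS; case: (b =P k2) => [->|] //=; rewrite andbF !mulr0.
have gc a b c : c%:Z * G a b (c - 1)%N = (k3.+1)%:Z * ([&& a == k1, b == k2 & c == k3.+1] : nat)%:Z.
  rewrite /G; case: c => [|c] /=; first by rewrite mul0r !andbF mulr0.
  by rewrite subn1 /= eqSS; case: (c =P k3) => [->|] //=; rewrite !andbF !mulr0.
move=> a b c; rewrite !mulrBr fa fb fc ga gb gc PoszD; ring.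
Qed.

Lemma perpair (x y : T) :
  (\sum_v ([&& x \in [set: T] :\ v, y \in [set: T] :\ v, e x y,
      #|[set z in [set: T] :\ v | e x z && e y z]| == k1,
      #|[set z in [set: T] :\ v | [&& e x z, ~~ e y z & z != y]]| == k2 &
      #|[set z in [set: T] :\ v | [&& e y z, ~~ e x z & z != x]]| == k3] : nat))%N%:Z
  = (#|T|%:Z - 2 - k1%:Z - k2%:Z - k3%:Z) *
     ([&& x \in [set: T], y \in [set: T], e x y,
      #|[set z in [set: T] | e x z && e y z]| == k1,
      #|[set z in [set: T] | [&& e x z, ~~ e y z & z != y]]| == k2 &
      #|[set z in [set: T] | [&& e y z, ~~ e x z & z != x]]| == k3] : nat)%:Z
   + (k1.+1)%:Z * ([&& x \in [set: T], y \in [set: T], e x y,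
      #|[set z in [set: T] | e x z && e y z]| == k1.+1,
      #|[set z in [set: T] | [&& e x z, ~~ e y z & z != y]]| == k2 &
      #|[set z in [set: T] | [&& e y z, ~~ e x z & z != x]]| == k3] : nat)%:Z
   + (k2.+1)%:Z * ([&& x \in [set: T], y \in [set: T], e x y,
      #|[set z in [set: T] | e x z && e y z]| == k1,
      #|[set z in [set: T] | [&& e x z, ~~ e y z & z != y]]| == k2.+1 &
      #|[set z in [set: T] | [&& e y z, ~~ e x z & z != x]]| == k3] : nat)%:Z
   + (k3.+1)%:Z * ([&& x \in [set: T], y \in [set: T], e x y,
      #|[set z in [set: T] | e x z && e y z]| == k1,
      #|[set z in [set: T] | [&& e x z, ~~ e y z & z != y]]| == k2 &
      #|[set z in [set: T] | [&& e y z, ~~ e x z & z != x]]| == k3.+1] : nat)%:Z.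
Proof.
case exy: (e x y); last first.
  rewrite big1 => [|v _]; last by rewrite /= !andbF.
  by rewrite !in_setT /= !mulr0 !addr0.
have xy : x != y by apply/eqP => E; rewrite E e_irr in exy.
rewrite !in_setT /= !setTfilter !setIT.
set N := [set z | e x z && e y z].
set X := [set z | [&& e x z, ~~ e y z & z != y]].
set Y := [set z | [&& e y z, ~~ e x z & z != x]].
rewrite sumZ.
have H v : ([&& x \in [set: T] :\ v, y \in [set: T] :\ v,
      #|[set z in [set: T] :\ v | e x z && e y z]| == k1,
      #|[set z in [set: T] :\ v | [&& e x z, ~~ e y z & z != y]]| == k2 &
      #|[set z in [set: T] :\ v | [&& e y z, ~~ e x z & z != x]]| == k3] : nat)%:Z
  = (((v != x) && (v != y)):nat)%:Z * G #|N| #|X| #|Y|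
    + ((v \in N):nat)%:Z * (G (#|N| - 1)%N #|X| #|Y| - G #|N| #|X| #|Y|)
    + ((v \in X):nat)%:Z * (G #|N| (#|X| - 1)%N #|Y| - G #|N| #|X| #|Y|)
    + ((v \in Y):nat)%:Z * (G #|N| #|X| (#|Y| - 1)%N - G #|N| #|X| #|Y|).
  rewrite !setD1filter -/N -/X -/Y !cardsD1' !inE ?andbT /= (eq_sym x) (eq_sym y).
  apply: point.
    by apply: contraTneq => ->; rewrite e_irr.
  by apply: contraTneq => ->; rewrite e_irr.
rewrite (eq_bigr _ (fun v _ => H v)) !big_split /= -!big_distrl /= -!sumZ -!card_sum.
have setin (A : {set T}) : [set p in A] = A by apply/setP => z; rewrite inE.
rewrite !setin; apply: final.
have -> : [set p | (p != x) && (p != y)] = ~: [set x; y].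
  by apply/setP => z; rewrite !inE negb_or.
by rewrite -(cardsC [set x; y]) cards2 xy addnC.
Qed.

End Aux.

Theorem theorem16 (T : finType) (e : rel T)
  (e_sym : symmetric e) (e_irr : irreflexive e)
  (e_conn : connected_graph e)
  (k1 k2 k3 : nat) (hk : k2 <> k3) :
  ((\sum_(v : T) dav_del e v k1 k2 k3)%N)%:Z =
    (#|T|%:Z - 2 - k1%:Z - k2%:Z - k3%:Z) * (dav e k1 k2 k3)%:Z
    + (k1.+1)%:Z * (dav e k1.+1 k2 k3)%:Z
    + (k2.+1)%:Z * (dav e k1 k2.+1 k3)%:Z
    + (k3.+1)%:Z * (dav e k1 k2 k3.+1)%:Z.
Proof.
rewrite /dav_del /dav /dav_on.
under eq_bigr => v _ do rewrite card_sum.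
rewrite exchange_big /= sumZ !card_sum !sumZ !big_distrr -!big_split /=.
apply: eq_bigr => [[x y]] _ /=.
exact: perpair.
Qed.
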